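(* Let $K\supseteq\mathbb{F}_q$ be a field with Frobenius $\phi_q\colon a\mapsto a^q$, let $(M,\Phi)$ be an $n$-dimensional Frobenius module over $(K,\phi_q)$ with representing matrix $D\in\operatorname{GL}_n(K)$ with respect to some basis, and let $f\in K[X]$ be a polynomial of degree $q^n$. Suppose that every solution $x=(x_1,\ldots,x_n)\in\overline K^{\,n}$ of $D\cdot(x_1^q,\dots,x_n^q)^{\mathrm{tr}}=x$ is uniquely determined by its first coordinate $x_1$, that all other coordinates of $x$ lie in the field $K(x_1)$, and that $f(x_1)=0$. Then $\mathrm{Gal}^\Phi(M)\cong\mathrm{Gal}_K(f)$.
   Context: A Frobenius module over $(K,\phi_q)$ is a finite-dimensional $K$-vector space $M$ with an injective $\phi_q$-semilinear map $\Phi$; its representing matrix $D$ in a basis satisfies $\Phi(x)=D\cdot(x_1^q,\dots,x_n^q)^{\mathrm{tr}}$ in coordinates. The solution field is the minimal extension $L/K$ (inside the algebraic closure $\overline K$) such that $\{x\in L\otimes M:\Phi(x)=x\}$ has $\mathbb{F}_q$-dimension $\dim_K M$; it is Galois over $K$ and $\mathrm{Gal}^\Phi(M):=\mathrm{Gal}(L/K)$. *)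

(* Defs.v *)
From HB Require Import structures.
From mathcomp Require Import all_boot all_order all_algebra all_fingroup all_field.
Set Implicit Arguments.
Unset Strict Implicit.
Unset Printing Implicit Defensive.
Import GRing.Theory.
Local Open Scope ring_scope.

Section FrobSolutions.
Variables (K : fieldType) (L : fieldExtType K) (q n : nat).

Definition is_frob_sol (D : 'M[K]_n) (x : 'cV[L]_n) : Prop :=
  map_mx (in_alg L) D *m map_mx (fun a : L => a ^+ q) x = x.

Definition coords_in (E : {vspace L}) (x : 'cV[L]_n) : Prop :=
  forall i, x i 0 \in E.

(* the fixed-point space with coordinates in E has F_q-dimension n,
   i.e. it is a finite set with exactly q^n elements *)
Definition full_sol_space (D : 'M[K]_n) (E : {vspace L}) : Prop :=
  exists s : seq 'cV[L]_n,
    [/\ uniq s, size s = (q ^ n)%N &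
        forall x, (is_frob_sol D x /\ coords_in E x) <-> x \in s].

Definition is_solution_field (D : 'M[K]_n) (E : {subfield L}) : Prop :=
  full_sol_space D E /\
  forall E' : {subfield L}, full_sol_space D E' -> (E <= E')%VS.
End FrobSolutions.

(* Main.v *)
Require Import Defs.
From HB Require Import structures.
From mathcomp Require Import all_boot all_order all_algebra all_fingroup all_field.
Import GRing.Theory.
Local Open Scope ring_scope.

Theorem mainTheorem10
  (K : fieldType) (Fq : finFieldType) (iota : {rmorphism Fq -> K})
  (n : nat) (hn : (0 < n)%N) (D : 'M[K]_n) (f : {poly K})
  (L : splittingFieldType K) (Esol Ef : {subfield L}) :
  let q := #|Fq| in
  let x1 := fun x : 'cV[L]_n => x (Ordinal hn) 0 in
  D \in unitmx ->
  size f = (q ^ n).+1 ->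
  is_solution_field q D Esol ->
  splittingFieldFor 1%VS (map_poly (in_alg L) f) Ef ->
  (forall x y, is_frob_sol q D x -> is_frob_sol q D y -> x1 x = x1 y -> x = y) ->
  (forall x, is_frob_sol q D x -> forall i, x i 0 \in <<1%VS; x1 x>>%VS) ->
  (forall x, is_frob_sol q D x -> root (map_poly (in_alg L) f) (x1 x)) ->
  ('Gal(Esol / 1%VS) \isog 'Gal(Ef / 1%VS))%g.
Proof.
move=> q x1 _ szf [[s [us ss hs]] hmin] [rs hrs Efdef] hinj hcoord hroot.
set fL := map_poly (in_alg L) f.
have szfL : size fL = (q ^ n).+1 by rewrite /fL size_map_poly.
have fL0 : fL != 0 by rewrite -size_poly_eq0 szfL.
have sols : forall x, x \in s -> is_frob_sol q D x by move=> x /hs [].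
set r := map x1 s.
have ur : uniq r.
  rewrite map_inj_in_uniq // => x y xs ys; exact: hinj (sols _ xs) (sols _ ys).
have rr : all (root fL) r.
  by apply/allP => z /mapP [x xs ->]; apply: hroot; apply: sols.
have sr : size r = (q ^ n)%N by rewrite size_map.
have allr : forall z, root fL z -> z \in r.
  move=> z hz; apply/negPn/negP => zr.
  have := max_poly_roots fL0 (rs := z :: r); rewrite /= hz rr zr ur szfL sr.
  by rewrite ltnn => /(_ isT isT).
have insol : forall x, is_frob_sol q D x -> x \in s.
  move=> x hx; have /mapP [y ys eq] := allr _ (hroot _ hx).
  by rewrite (hinj _ _ hx (sols _ ys) eq).
have rsr : forall z, z \in rs -> z \in r.
  by move=> z zrs; apply: allr; rewrite (eqp_root hrs) root_prod_XsubC.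
have rEf : forall z, root fL z -> z \in Ef.
  move=> z hz; rewrite -Efdef; apply: seqv_sub_adjoin.
  by rewrite -root_prod_XsubC -(eqp_root hrs).
have sub1 : (Ef <= Esol)%VS.
  rewrite -Efdef; apply/Fadjoin_seqP; split; first exact: sub1v.
  move=> z /rsr /mapP [x xs ->]; have [_ hc] := (hs x).2 xs; exact: hc.
have sub2 : (Esol <= Ef)%VS.
  apply: hmin; exists s; split => // x; split; first by move=> [hx _]; apply: insol.
  move=> xs; split; first exact: sols.
  move=> i; have := hcoord _ (sols _ xs) i; apply: subvP.
  by rewrite sub_adjoin1v; apply: rEf; apply: hroot; apply: sols.
have -> : Esol = Ef by apply/val_inj/subv_anti; rewrite sub2 sub1.
exact: isog_refl.
Qed.
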